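(* Assume $\mathsf{MA}(\sigma\text{-centered})$. Let $\kappa<\mathfrak{c}$ be a cardinal. Suppose that for each $\alpha<\kappa$, $\lambda_\alpha<\mathfrak{c}$ is an infinite cardinal and $A_\alpha$, $B_\alpha$ are $\lambda_\alpha$-dense subsets of $2^\omega$, and that $A_\alpha\cap A_\beta=\varnothing$ and $B_\alpha\cap B_\beta=\varnothing$ whenever $\alpha<\beta<\kappa$. Then there exists a homeomorphism $f:2^\omega\to2^\omega$ such that $f[A_\alpha]=B_\alpha$ for every $\alpha<\kappa$.
   Context: For an infinite cardinal $\lambda$, a subset $D$ of a space $X$ is $\lambda$-dense in $X$ if $|D\cap U|=\lambda$ for every non-empty open $U\subseteq X$. $\mathsf{MA}(\sigma\text{-centered})$ is Martin's Axiom restricted to $\sigma$-centered posets. *)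

(* Defs.v *)
From Stdlib Require Import List.

Definition card_le (A B : Type) : Prop :=
  exists f : A -> B, forall x y, f x = f y -> x = y.
Definition card_lt (A B : Type) : Prop := card_le A B /\ ~ card_le B A.
Definition equinumerous (A B : Type) : Prop :=
  exists f : A -> B, (forall x y, f x = f y -> x = y) /\ (forall y, exists x, f x = y).
Definition infinite_type (A : Type) : Prop := card_le nat A.

Definition Cantor := nat -> bool.
Definition agree (n : nat) (x y : Cantor) : Prop := forall i, i < n -> x i = y i.
Definition is_open (U : Cantor -> Prop) : Prop :=
  forall x, U x -> exists n, forall y, agree n x y -> U y.
Definition continuous (f : Cantor -> Cantor) : Prop :=
  forall U, is_open U -> is_open (fun x => U (f x)).
Definition homeomorphism (f : Cantor -> Cantor) : Prop :=
  continuous f /\ exists g : Cantor -> Cantor,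
    continuous g /\ (forall x, g (f x) = x) /\ (forall y, f (g y) = y).

(** D is lambda-dense in 2^omega (lambda given as a type L):
    |D ∩ U| = lambda for every non-empty open U. *)
Definition dense_card (L : Type) (D : Cantor -> Prop) : Prop :=
  forall U, is_open U -> (exists x, U x) ->
    equinumerous {x : Cantor | D x /\ U x} L.

Definition image (f : Cantor -> Cantor) (A : Cantor -> Prop) : Cantor -> Prop :=
  fun y => exists x, A x /\ f x = y.

(** Posets, sigma-centered posets, dense sets, filters. p <= q means p is
    stronger (extends) q. *)
Definition partial_order {P : Type} (le : P -> P -> Prop) : Prop :=
  (forall p, le p p) /\ (forall p q r, le p q -> le q r -> le p r) /\
  (forall p q, le p q -> le q p -> p = q).
Definition centered {P : Type} (le : P -> P -> Prop) (C : P -> Prop) : Prop :=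
  forall l : list P, (forall p, In p l -> C p) -> exists r, forall p, In p l -> le r p.
Definition sigma_centered {P : Type} (le : P -> P -> Prop) : Prop :=
  exists c : P -> nat, forall n, centered le (fun p => c p = n).
Definition dense_in {P : Type} (le : P -> P -> Prop) (D : P -> Prop) : Prop :=
  forall p, exists q, le q p /\ D q.
Definition is_filter {P : Type} (le : P -> P -> Prop) (G : P -> Prop) : Prop :=
  (exists p, G p) /\
  (forall p q, G p -> le p q -> G q) /\
  (forall p q, G p -> G q -> exists r, G r /\ le r p /\ le r q).

Definition MA_sigma_centered : Prop :=
  forall (P : Type) (le : P -> P -> Prop),
    partial_order le -> sigma_centered le ->
    forall (I : Type) (D : I -> P -> Prop),
      card_lt I Cantor -> (forall i, dense_in le (D i)) ->
      exists G, is_filter le G /\ forall i, exists p, G p /\ D i p.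

(* Main.v *)
Require Import Defs.
From Stdlib Require Import List Arith Lia Classical ClassicalEpsilon
  FunctionalExtensionality PropExtensionality ProofIrrelevance.
From Stdlib Require Arith.Cantor.
Import ListNotations.

Lemma card_le_trans A B C : card_le A B -> card_le B C -> card_le A C.
Proof.
  intros [f Hf] [g Hg]. exists (fun x => g (f x)). intros x y H. auto.
Qed.

Lemma card_lt_mono X Y : card_le X Y -> card_lt Y Cantor -> card_lt X Cantor.
Proof.
  intros HXY [H1 H2]. split.
  - eapply card_le_trans; eauto.
  - intro H. apply H2. eapply card_le_trans; eauto.
Qed.

Definition interleave (x z : Cantor) : Cantor :=
  fun i => if Nat.even i then x (Nat.div2 i) else z (Nat.div2 i).

Lemma even_double i : Nat.even (2 * i) = true.
Proof. rewrite Nat.even_mul. reflexivity. Qed.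
Lemma even_double1 i : Nat.even (S (2 * i)) = false.
Proof. rewrite Nat.even_succ, Nat.odd_mul. reflexivity. Qed.

Lemma interleave_l x z i : interleave x z (2 * i) = x i.
Proof. unfold interleave. rewrite even_double, Nat.div2_double. auto. Qed.
Lemma interleave_r x z i : interleave x z (S (2 * i)) = z i.
Proof. unfold interleave. rewrite even_double1, Nat.div2_succ_double. auto. Qed.

Lemma interleave_inj x z x' z' : interleave x z = interleave x' z' -> x = x' /\ z = z'.
Proof.
  intro H. split; apply functional_extensionality; intro i.
  - rewrite <- (interleave_l x z), <- (interleave_l x' z'), H; auto.
  - rewrite <- (interleave_r x z), <- (interleave_r x' z'), H; auto.
Qed.

Lemma sum_nat_lt X : card_lt X Cantor -> card_lt (X + nat) Cantor.
Proof.
  intros [[e He] H2]. split.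
  - exists (fun s => match s with
                    | inl y => fun i => match i with 0 => true | S j => e y j end
                    | inr n => fun i => match i with 0 => false | S j => Nat.eqb j n end
                    end).
    intros [y|n] [y'|n'] H.
    + f_equal. apply He. apply functional_extensionality; intro j.
      exact (f_equal (fun f => f (S j)) H).
    + exfalso. pose proof (f_equal (fun f => f 0) H). discriminate.
    + exfalso. pose proof (f_equal (fun f => f 0) H). discriminate.
    + f_equal. pose proof (f_equal (fun f => f (S n)) H). simpl in H0.
      rewrite Nat.eqb_refl in H0. symmetry in H0. apply Nat.eqb_eq in H0. auto.
  - intros [g Hg]. apply H2.
    assert (Hx : forall n, exists xn : Cantor, (exists x, g x = inr n) -> g xn = inr n).
    { intro n. destruct (classic (exists x, g x = inr n)) as [[x Hx]|Hn].
      - exists x; auto.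
      - exists (fun _ => true). intro; contradiction. }
    set (xs := fun n => proj1_sig (constructive_indefinite_description _ (Hx n))).
    assert (Hxs : forall n, (exists x, g x = inr n) -> g (xs n) = inr n).
    { intro n. exact (proj2_sig (constructive_indefinite_description _ (Hx n))). }
    set (z := fun n => negb (xs n (S (2 * n)))).
    assert (Hl : forall x, exists y, g (interleave x z) = inl y).
    { intro x. destruct (g (interleave x z)) as [y|n] eqn:E.
      - eauto.
      - exfalso. assert (E2 := Hxs n (ex_intro _ _ E)). rewrite <- E in E2.
        apply Hg in E2. assert (E3 := f_equal (fun f => f (S (2 * n))) E2). cbv beta in E3.
        rewrite interleave_r in E3. unfold z in E3. destruct (xs n (S (2 * n))); discriminate. }
    exists (fun x => proj1_sig (constructive_indefinite_description _ (Hl x))).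
    intros x x' H.
    pose proof (proj2_sig (constructive_indefinite_description _ (Hl x))) as A1.
    pose proof (proj2_sig (constructive_indefinite_description _ (Hl x'))) as A2.
    simpl in *. rewrite H in A1. rewrite <- A2 in A1. apply Hg in A1.
    apply interleave_inj in A1. tauto.
Qed.

Definition cls {P} (le : P -> P -> Prop) (p : P) : P -> Prop := fun q => le p q /\ le q p.

Lemma MA_pre (MA : MA_sigma_centered) (P : Type) (le : P -> P -> Prop)
  (Hr : forall p, le p p) (Ht : forall p q r, le p q -> le q r -> le p r)
  (Hs : sigma_centered le) (I : Type) (D : I -> P -> Prop) :
  card_lt I Cantor -> (forall i, dense_in le (D i)) ->
  exists G : P -> Prop, (forall p q, G p -> G q -> exists r, G r /\ le r p /\ le r q)
    /\ forall i, exists p, G p /\ D i p.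
Proof.
  intros HI HD.
  pose (Q := {S : P -> Prop | exists p, S = cls le p}).
  pose (leQ := fun (S T : Q) => exists p q, proj1_sig S = cls le p /\ proj1_sig T = cls le q /\ le p q).
  assert (Hcls : forall p q, cls le p = cls le q -> le p q /\ le q p).
  { intros p q H. assert (H0 : cls le q q) by (split; apply Hr). rewrite <- H in H0. exact H0. }
  assert (Hclseq : forall p q, le p q -> le q p -> cls le p = cls le q).
  { intros. apply functional_extensionality; intro z; apply propositional_extensionality;
    unfold cls; split; intros [? ?]; split; eauto. }
  assert (HPO : partial_order leQ).
  { split; [|split].
    - intros [S [p Hp]]. exists p, p. simpl. auto.
    - intros [S HS] [T HT] [U HU] [p [q [H1 [H2 H3]]]] [q' [r [H4 [H5 H6]]]]. simpl in *.
      exists p, r. repeat split; auto. rewrite H2 in H4. apply Hcls in H4. destruct H4. eauto.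
    - intros [S HS] [T HT] [p [q [H1 [H2 H3]]]] [q' [p' [H4 [H5 H6]]]]. simpl in *.
      subst. apply Hcls in H4. apply Hcls in H5. destruct H4, H5.
      assert (E : cls le p = cls le q) by (apply Hclseq; eauto).
      revert HS HT. rewrite E. intros. f_equal. apply proof_irrelevance. }
  pose (repQ := fun S : Q => proj1_sig (constructive_indefinite_description _ (proj2_sig S))).
  assert (Hrep : forall S : Q, proj1_sig S = cls le (repQ S)).
  { intro S. exact (proj2_sig (constructive_indefinite_description _ (proj2_sig S))). }
  assert (Hcl : forall p, exists p', cls le p = cls le p') by eauto.
  pose (mk := fun p : P => exist (fun S => exists p, S = cls le p) (cls le p) (Hcl p) : Q).
  assert (HSC : sigma_centered leQ).
  { destruct Hs as [c Hc]. exists (fun S => c (repQ S)). intros n l Hl.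
    destruct (Hc n (map repQ l)) as [r Hr'].
    { intros p Hp. apply in_map_iff in Hp. destruct Hp as [S [<- HS]]. auto. }
    exists (mk r). intros S HS. exists r, (repQ S). simpl. repeat split; auto.
    apply Hr'. apply in_map; auto. }
  pose (DQ := fun i (S : Q) => exists p, proj1_sig S = cls le p /\ D i p).
  assert (HDQ : forall i, dense_in leQ (DQ i)).
  { intros i S. destruct (HD i (repQ S)) as [q [Hq1 Hq2]].
    exists (mk q). split.
    - exists q, (repQ S). simpl. auto.
    - exists q. simpl. auto. }
  destruct (MA Q leQ HPO HSC I DQ HI HDQ) as [GQ [[_ [_ Hf]] Hm]].
  exists (fun p => exists S, GQ S /\ proj1_sig S = cls le p). split.
  - intros p q [S [HS1 HS2]] [T [HT1 HT2]].
    destruct (Hf S T HS1 HT1) as [R [HR [[p1 [q1 [E1 [E2 E3]]]] [p2 [q2 [E4 [E5 E6]]]]]]].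
    exists p1. split; [exists R; auto|].
    rewrite HS2 in E2. rewrite HT2 in E5. rewrite E1 in E4.
    apply Hcls in E2. apply Hcls in E5. apply Hcls in E4. split.
    + destruct E2. eauto.
    + destruct E5, E4. eauto.
  - intro i. destruct (Hm i) as [S [HS [p [Hp1 Hp2]]]]. exists p. split; eauto.
Qed.

Definition enc (w : nat -> nat) : Cantor :=
  fun m => let (n, k) := Cantor.of_nat m in Nat.eqb (w n) k.

Lemma enc_inj w w' : enc w = enc w' -> w = w'.
Proof.
  intro H. apply functional_extensionality; intro n.
  assert (E := f_equal (fun f => f (Cantor.to_nat (n, w n))) H). cbv beta in E.
  unfold enc in E. rewrite Cantor.cancel_of_to in E. rewrite Nat.eqb_refl in E.
  symmetry in E. apply Nat.eqb_eq in E. auto.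
Qed.

Fixpoint code (l : list nat) : nat :=
  match l with [] => 0 | h :: t => S (Cantor.to_nat (h, code t)) end.

Lemma code_inj l l' : code l = code l' -> l = l'.
Proof.
  revert l'; induction l as [|h t IH]; intros [|h' t'] H; cbn [code] in H; try discriminate; auto.
  apply Nat.succ_inj in H. apply (f_equal Cantor.of_nat) in H. rewrite !Cantor.cancel_of_to in H.
  injection H as -> H. f_equal; auto.
Qed.

Definition prefix (s t : list nat) := exists r, t = s ++ r.

Lemma prefix_nth s t i : prefix s t -> i < length s -> nth i t 0 = nth i s 0.
Proof. intros [r ->] H. apply app_nth1; auto. Qed.
Lemma prefix_len s t : prefix s t -> length s <= length t.
Proof. intros [r ->]. rewrite length_app. lia. Qed.
Lemma prefix_refl s : prefix s s.
Proof. exists []. rewrite app_nil_r; auto. Qed.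
Lemma prefix_trans s t u : prefix s t -> prefix t u -> prefix s u.
Proof. intros [r ->] [r' ->]. exists (r ++ r'). rewrite app_assoc; auto. Qed.

(* generic "eventually" poset: conditions (s,F), new positions must satisfy R *)

Definition evle {X} (R : X -> nat -> nat -> Prop) (q p : list nat * list X) : Prop :=
  prefix (fst p) (fst q) /\ incl (snd p) (snd q) /\
  forall i, length (fst p) <= i < length (fst q) -> forall w, In w (snd p) -> R w i (nth i (fst q) 0).

Lemma evle_refl {X} R (p : list nat * list X) : evle R p p.
Proof. split; [apply prefix_refl|split; [apply incl_refl|]]. intros; lia. Qed.

Lemma evle_trans {X} R (p q r : list nat * list X) : evle R p q -> evle R q r -> evle R p r.
Proof.
  intros [H1 [H2 H3]] [H4 [H5 H6]]. split; [eapply prefix_trans; eauto|split; [eapply incl_tran; eauto|]].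
  intros i Hi w Hw. destruct (le_lt_dec (length (fst q)) i).
  - apply H3; auto. lia.
  - rewrite (prefix_nth _ _ _ H1 l). apply H6; auto. lia.
Qed.

Lemma evle_sc {X} R : sigma_centered (@evle X R).
Proof.
  exists (fun p => code (fst p)). intros n l Hl.
  destruct l as [|p0 l].
  - exists ([], []). intros p [].
  - exists (fst p0, flat_map snd (p0 :: l)). intros p Hp.
    assert (E : fst p = fst p0).
    { apply code_inj. rewrite (Hl p Hp), (Hl p0 (or_introl eq_refl)). auto. }
    split; [rewrite E; apply prefix_refl|split].
    + intros w Hw. apply in_flat_map. eauto.
    + simpl. intros. rewrite E in H. lia.
Qed.

Lemma evle_ext {X} (R : X -> nat -> nat -> Prop)
  (Hext : forall (F : list X) i, exists v, forall w, In w F -> R w i v) :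
  forall k (p : list nat * list X), exists q, evle R q p /\ length (fst q) = length (fst p) + k /\ snd q = snd p.
Proof.
  induction k as [|k IH]; intro p.
  - exists p. rewrite Nat.add_0_r. split; auto. apply evle_refl.
  - destruct (IH p) as [q [Hq1 [Hq2 Hq3]]].
    destruct (Hext (snd q) (length (fst q))) as [v Hv].
    exists (fst q ++ [v], snd q). split; [|split; auto].
    + eapply evle_trans; [|exact Hq1]. split; [exists [v]; auto|split; [apply incl_refl|]].
      simpl. intros i Hi w Hw. rewrite length_app in Hi; simpl in Hi.
      assert (i = length (fst q)) by lia. subst. rewrite app_nth2, Nat.sub_diag by lia. simpl. auto.
    + simpl. rewrite length_app. simpl. lia.
Qed.

Lemma ev_generic (MA : MA_sigma_centered) {X} (R : X -> nat -> nat -> Prop)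
  (Hext : forall (F : list X) i, exists v, forall w, In w F -> R w i v)
  (Y : X -> Prop) : card_lt {w | Y w} Cantor ->
  exists x : nat -> nat, forall w, Y w -> exists N, forall i, N <= i -> R w i (x i).
Proof.
  intro HY.
  pose (D := fun (j : {w | Y w} + nat) (p : list nat * list X) =>
    match j with inl w => In (proj1_sig w) (snd p) | inr n => n <= length (fst p) end).
  destruct (MA_pre MA _ (evle R) (evle_refl R) (fun p q r H1 H2 => evle_trans R p q r H1 H2)
    (evle_sc R) _ D (sum_nat_lt _ HY)) as [G [HG HGm]].
  { intros [w|n] p.
    - exists (fst p, proj1_sig w :: snd p). split; [|simpl; auto].
      split; [apply prefix_refl|split].
      + intros z Hz; simpl; auto.
      + simpl; intros; lia.
    - destruct (evle_ext R Hext n p) as [q [Hq1 [Hq2 _]]]. exists q. split; auto.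
      simpl. lia. }
  assert (Hpick : forall i, exists p, G p /\ S i <= length (fst p)) by (intro i; exact (HGm (inr (S i)))).
  pose (pk := fun i => proj1_sig (constructive_indefinite_description _ (Hpick i))).
  assert (Hpk : forall i, G (pk i) /\ S i <= length (fst (pk i))).
  { intro i. exact (proj2_sig (constructive_indefinite_description _ (Hpick i))). }
  exists (fun i => nth i (fst (pk i)) 0). intros w Hw.
  destruct (HGm (inl (exist _ w Hw))) as [p0 [Hp0 Hin]]. simpl in Hin.
  exists (length (fst p0)). intros i Hi.
  destruct (Hpk i) as [Hq1 Hq2].
  destruct (HG _ _ Hp0 Hq1) as [r [Hr [[Hr1 [Hr2 Hr3]] [Hr4 _]]]].
  rewrite <- (prefix_nth _ _ _ Hr4) by lia.
  apply Hr3; auto. split; auto. apply prefix_len in Hr4. lia.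
Qed.

Lemma testbit_fold (F : list nat) j : In j F -> Nat.testbit (fold_right Nat.lor 0 (map (fun k => 2 ^ k) F)) j = true.
Proof.
  induction F as [|k F IH]; simpl; [tauto|]. intros [<-|H]; rewrite Nat.lor_spec.
  - rewrite Nat.pow2_bits_true. auto.
  - rewrite IH; auto. apply Bool.orb_true_r.
Qed.

Lemma GL (MA : MA_sigma_centered) (K : Type) (T : K -> Type) :
  card_lt K Cantor -> (forall a, card_lt (T a) Cantor) -> card_lt {a : K & T a} Cantor.
Proof.
  intros HK HT. split.
  - destruct HK as [[ek Hek] _].
    pose (e := fun a => proj1_sig (constructive_indefinite_description _ (proj1 (HT a)))).
    assert (He : forall a x y, e a x = e a y -> x = y).
    { intro a. exact (proj2_sig (constructive_indefinite_description _ (proj1 (HT a)))). }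
    exists (fun s => interleave (ek (projT1 s)) (e (projT1 s) (projT2 s))).
    intros [a t] [a' t'] H. simpl in H. apply interleave_inj in H. destruct H as [H1 H2].
    apply Hek in H1. subst a'. apply He in H2. subst. auto.
  - intros [g Hg].
    pose (h := fun w => g (enc w)).
    assert (Hh : forall w w', h w = h w' -> w = w') by (intros; apply enc_inj, Hg; auto).
    assert (C1 : forall a, exists x : nat -> nat, forall w, projT1 (h w) = a ->
              exists N, forall i, N <= i -> Nat.testbit (w i) (x i) = false).
    { intro a.
      assert (HY : card_lt {w | projT1 (h w) = a} Cantor).
      { apply (card_lt_mono _ (T a)); auto.
        assert (Ex : forall w : {w | projT1 (h w) = a}, exists t : T a, h (proj1_sig w) = existT T a t).
        { intros [w Hw]. simpl. destruct (h w) as [a' t]. simpl in Hw. subst. eauto. }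
        exists (fun w => proj1_sig (constructive_indefinite_description _ (Ex w))).
        intros w w' E.
        pose proof (proj2_sig (constructive_indefinite_description _ (Ex w))) as A1.
        pose proof (proj2_sig (constructive_indefinite_description _ (Ex w'))) as A2.
        simpl in *. rewrite E, <- A2 in A1. apply Hh in A1.
        destruct w, w'; simpl in *; subst. f_equal. apply proof_irrelevance. }
      apply (ev_generic MA (fun (w : nat -> nat) i v => Nat.testbit (w i) v = false) ) in HY.
      - destruct HY as [x Hx]. exists x. auto.
      - intros F i. exists (S (fold_right max 0 (map (fun w => Nat.log2 (w i)) F))).
        intros w Hw. apply Nat.bits_above_log2.
        assert (Nat.log2 (w i) <= fold_right max 0 (map (fun w => Nat.log2 (w i)) F)).
        { clear -Hw. induction F as [|w' F IH]; simpl in *; [tauto|].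
          destruct Hw as [<-|Hw]; [lia|]. specialize (IH Hw). lia. }
        lia. }
    pose (x := fun a => proj1_sig (constructive_indefinite_description _ (C1 a))).
    assert (Hx : forall a w, projT1 (h w) = a ->
              exists N, forall i, N <= i -> Nat.testbit (w i) (x a i) = false).
    { intro a. exact (proj2_sig (constructive_indefinite_description _ (C1 a))). }
    assert (HK' : card_lt {a : K | True} Cantor).
    { apply (card_lt_mono _ K); auto. exists (@proj1_sig _ _). intros [a []] [b []] E. simpl in E. subst; auto. }
    destruct (ev_generic MA (fun (a : K) i v => Nat.testbit v (x a i) = true) ) with (Y := fun _ : K => True)
      as [w Hw]; auto.
    + intros F i. exists (fold_right Nat.lor 0 (map (fun k => 2 ^ k) (map (fun a => x a i) F))).
      intros a Ha. apply testbit_fold. apply in_map_iff. exists a; auto.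
    + destruct (Hx (projT1 (h w)) w eq_refl) as [N1 HN1].
      destruct (Hw (projT1 (h w)) I) as [N2 HN2].
      specialize (HN1 (N1 + N2) ltac:(lia)). specialize (HN2 (N1 + N2) ltac:(lia)).
      congruence.
Qed.

Lemma bool_lt : card_lt bool Cantor.
Proof.
  split.
  - exists (fun b _ => b). intros x y H. exact (f_equal (fun f => f 0) H).
  - intros [g Hg].
    pose (x1 := fun _ : nat => true). pose (x2 := fun _ : nat => false).
    pose (x3 := fun i => Nat.eqb i 0).
    assert (N12 : x1 <> x2) by (intro H; discriminate (f_equal (fun f => f 0) H)).
    assert (N13 : x1 <> x3) by (intro H; discriminate (f_equal (fun f => f 1) H)).
    assert (N23 : x2 <> x3) by (intro H; discriminate (f_equal (fun f => f 0) H)).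
    destruct (g x1) eqn:E1, (g x2) eqn:E2, (g x3) eqn:E3;
    first [ apply N12, Hg; congruence | apply N13, Hg; congruence | apply N23, Hg; congruence ].
Qed.

Lemma sum_lt (MA : MA_sigma_centered) X Y :
  card_lt X Cantor -> card_lt Y Cantor -> card_lt (X + Y) Cantor.
Proof.
  intros HX HY.
  apply (card_lt_mono _ {b : bool & if b then X else Y}).
  - exists (fun s => match s with inl x => existT (fun b : bool => if b then X else Y) true x
                           | inr y => existT (fun b : bool => if b then X else Y) false y end).
    intros [x|y] [x'|y'] H; try discriminate;
      apply Eqdep_dec.inj_pair2_eq_dec in H; try apply Bool.bool_dec; subst; auto.
  - apply GL; auto. apply bool_lt. intros []; auto.
Qed.

Definition pre (n : nat) (x : Cantor) : list bool := map x (seq 0 n).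

Lemma length_pre n x : length (pre n x) = n.
Proof. unfold pre. rewrite length_map, length_seq. auto. Qed.

Lemma nth_pre n x i : i < n -> nth i (pre n x) false = x i.
Proof.
  intro H. unfold pre. rewrite nth_indep with (d' := x 0) by (rewrite length_map, length_seq; auto).
  rewrite map_nth, seq_nth; auto.
Qed.

Lemma list_eq_nth (l l' : list bool) : length l = length l' ->
  (forall i, i < length l -> nth i l false = nth i l' false) -> l = l'.
Proof. intros. apply nth_ext with (d := false) (d' := false); auto. Qed.

Lemma nth_firstn_lt (l : list bool) m i : i < m -> nth i (firstn m l) false = nth i l false.
Proof.
  revert m l; induction i; intros [|m] [|b l] H; simpl; auto; try lia.
  apply IHi. lia.
Qed.

Lemma firstn_pre m n x : m <= n -> firstn m (pre n x) = pre m x.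
Proof.
  intro H. apply list_eq_nth.
  - rewrite length_firstn, !length_pre. lia.
  - intros i Hi. rewrite length_firstn, length_pre in Hi.
    rewrite nth_firstn_lt by lia. rewrite !nth_pre by lia. auto.
Qed.

Lemma pre_agree n x y : pre n x = pre n y -> agree n x y.
Proof.
  intros H i Hi. rewrite <- (nth_pre n x i Hi), <- (nth_pre n y i Hi), H. auto.
Qed.

Lemma agree_pre n x y : agree n x y -> pre n x = pre n y.
Proof.
  intro H. apply list_eq_nth; rewrite ?length_pre; auto.
  intros i Hi. rewrite !nth_pre by auto. apply H; auto.
Qed.

Definition cone (u : list bool) (x : Cantor) : Prop := pre (length u) x = u.

Lemma cone_open u : is_open (cone u).
Proof.
  intros x Hx. exists (length u). intros y Hy. unfold cone in *.
  rewrite <- (agree_pre _ _ _ Hy). auto.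
Qed.

Lemma cone_ne u : exists x, cone u x.
Proof.
  exists (fun i => nth i u false). unfold cone. apply list_eq_nth; rewrite ?length_pre; auto.
  intros i Hi. rewrite nth_pre; auto.
Qed.

Lemma firstn_len_app (a b : list bool) n : length a = n -> firstn n (a ++ b) = a.
Proof.
  intro H. rewrite firstn_app, H, Nat.sub_diag. simpl. rewrite app_nil_r.
  apply firstn_all2. lia.
Qed.

Lemma skipn_len_app (a b : list bool) n : length a = n -> skipn n (a ++ b) = b.
Proof. intro H. subst. rewrite skipn_app, skipn_all, Nat.sub_diag. auto. Qed.

Definition sep (m : nat) (L : list Cantor) : Prop :=
  forall x1 x2, In x1 L -> In x2 L -> pre m x1 = pre m x2 -> x1 = x2.

Lemma sep_mono m m' L : sep m L -> m <= m' -> sep m' L.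
Proof.
  intros H Hm x1 x2 H1 H2 E. apply H; auto.
  rewrite <- (firstn_pre m m' x1), <- (firstn_pre m m' x2), E by auto. auto.
Qed.

Lemma sep_exists L : exists m, sep m L.
Proof.
  induction L as [|x L [m Hm]].
  - exists 0. intros ? ? [].
  - assert (Hd : forall y, In y L -> exists k, x = y \/ x k <> y k).
    { intros y _. destruct (classic (x = y)) as [E|E]; [exists 0; auto|].
      destruct (classic (exists k, x k <> y k)) as [[k Hk]|Hk]; [eauto|].
      exfalso. apply E. apply functional_extensionality. intro k.
      destruct (classic (x k = y k)); auto. exfalso; eauto. }
    assert (Hb : exists M, forall y, In y L -> x = y \/ exists k, k < M /\ x k <> y k).
    { clear -Hd. induction L as [|y L IH].
      - exists 0. intros ? [].
      - destruct IH as [M HM]; [intros; apply Hd; simpl; auto|].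
        destruct (Hd y (or_introl eq_refl)) as [k [Hk|Hk]].
        + exists M. intros z [<-|Hz]; auto.
        + exists (M + S k). intros z [<-|Hz]; [right; exists k; split; auto; lia|].
          destruct (HM z Hz) as [?|[k' [? ?]]]; auto. right. exists k'. split; auto. lia. }
    destruct Hb as [M HM]. exists (m + M).
    assert (Hx : forall y, In y L -> pre (m + M) x = pre (m + M) y -> x = y).
    { intros y Hy E. destruct (HM y Hy) as [?|[k [Hk1 Hk2]]]; auto.
      exfalso. apply Hk2. apply (pre_agree _ _ _ E). lia. }
    intros x1 x2 [<-|H1] [<-|H2] E; auto.
    + symmetry. apply Hx; auto.
    + refine (sep_mono m (m + M) L Hm _ x1 x2 H1 H2 E). lia.
Qed.

Lemma sep_sub m L L' : sep m L' -> incl L L' -> sep m L.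
Proof. intros H Hi x1 x2 H1 H2. apply H; auto. Qed.

Definition lenok (n : nat) (s t : list bool -> list bool) : Prop :=
  forall u, length u = n -> length (s u) = n /\ length (t u) = n /\ t (s u) = u /\ s (t u) = u.

Definition refines (n n' : nat) (s s' : list bool -> list bool) : Prop :=
  forall u, length u = n' -> firstn n (s' u) = s (firstn n u).

Record ent := mkE { ex : Cantor; ey : Cantor; eu : list bool; ev : list bool }.

Definition lbeq (a b : list bool) : {a = b} + {a <> b} := list_eq_dec Bool.bool_dec a b.

Definition swap (w t z : list bool) : list bool :=
  if lbeq z w then t else if lbeq z t then w else z.

Lemma swap_invol w t z : swap w t (swap w t z) = z.
Proof.
  unfold swap. destruct (lbeq z w) as [->|H1].
  - destruct (lbeq t w) as [->|H2]; auto. destruct (lbeq t t); congruence.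
  - destruct (lbeq z t) as [->|H2].
    + destruct (lbeq w w); congruence.
    + destruct (lbeq z w); [congruence|]. destruct (lbeq z t); congruence.
Qed.

Lemma swap_len w t z n : length w = n -> length t = n -> length z = n -> length (swap w t z) = n.
Proof. unfold swap. destruct (lbeq z w); destruct (lbeq z t); auto. Qed.

Lemma swap_firstn w t z n : firstn n w = firstn n t -> firstn n (swap w t z) = firstn n z.
Proof. unfold swap. destruct (lbeq z w); destruct (lbeq z t); subst; auto. Qed.

Lemma raise (n : nat) (s t : list bool -> list bool) (F : list ent) (ZX ZY : list Cantor) (N : nat) :
  lenok n s t ->
  (forall e, In e F -> s (pre n (ex e)) = pre n (ey e)) ->
  (forall e1 e2, In e1 F -> In e2 F -> (ex e1 = ex e2 <-> ey e1 = ey e2)) ->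
  exists n' s' t', n <= n' /\ N <= n' /\ lenok n' s' t' /\ refines n n' s s' /\
    (forall e, In e F -> s' (pre n' (ex e)) = pre n' (ey e)) /\
    sep n' (map ex F ++ ZX) /\ sep n' (map ey F ++ ZY).
Proof.
  intros Hl Hc Hb.
  destruct (sep_exists (map ex F ++ ZX)) as [m1 Hm1].
  destruct (sep_exists (map ey F ++ ZY)) as [m2 Hm2].
  set (n' := n + N + m1 + m2).
  assert (Hsx : sep n' (map ex F ++ ZX)) by (apply (sep_mono m1); auto; unfold n'; lia).
  assert (Hsy : sep n' (map ey F ++ ZY)) by (apply (sep_mono m2); auto; unfold n'; lia).
  assert (Hsx' : sep n' (map ex F)) by (apply (sep_sub _ _ (map ex F ++ ZX)); auto; apply incl_appl, incl_refl).
  assert (Hsy' : sep n' (map ey F)) by (apply (sep_sub _ _ (map ey F ++ ZY)); auto; apply incl_appl, incl_refl).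
  assert (Hnn : n <= n') by (unfold n'; lia).
  pose (s1 := fun u => s (firstn n u) ++ skipn n u).
  pose (t1 := fun u => t (firstn n u) ++ skipn n u).
  assert (Hl1 : lenok n' s1 t1).
  { intros u Hu. assert (Hf : length (firstn n u) = n) by (rewrite length_firstn; lia).
    destruct (Hl _ Hf) as [A1 [A2 [A3 A4]]].
    unfold s1, t1. rewrite !length_app, A1, A2, length_skipn.
    repeat split; try lia.
    - rewrite firstn_len_app, skipn_len_app by auto. rewrite A3. apply firstn_skipn.
    - rewrite firstn_len_app, skipn_len_app by auto. rewrite A4. apply firstn_skipn. }
  assert (Hr1 : refines n n' s s1).
  { intros u Hu. unfold s1. apply firstn_len_app.
    assert (Hf : length (firstn n u) = n) by (rewrite length_firstn; lia).
    apply (Hl _ Hf). }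
  assert (Main : forall Fp, incl Fp F -> exists s' t', lenok n' s' t' /\ refines n n' s s' /\
     forall e, In e Fp -> s' (pre n' (ex e)) = pre n' (ey e)).
  { induction Fp as [|e Fp IH]; intro Hi.
    - exists s1, t1. split; [auto|split; [auto|intros _ []]].
    - destruct IH as [s' [t' [H1 [H2 H3]]]]; [intros z Hz; apply Hi; simpl; auto|].
      assert (HeF : In e F) by (apply Hi; simpl; auto).
      set (w := s' (pre n' (ex e))). set (tt := pre n' (ey e)).
      assert (Hw : length w = n') by (apply H1, length_pre).
      assert (Htt : length tt = n') by apply length_pre.
      assert (Hwt : firstn n w = firstn n tt).
      { unfold w, tt. rewrite H2 by apply length_pre. rewrite !firstn_pre by auto. auto. }
      exists (fun z => swap w tt (s' z)), (fun z => t' (swap w tt z)). split; [|split].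
      + intros u Hu. destruct (H1 u Hu) as [A1 [A2 [A3 A4]]].
        assert (Hsu : length (swap w tt u) = n') by (apply swap_len; auto).
        destruct (H1 _ Hsu) as [B1 [B2 [B3 B4]]].
        repeat split.
        * apply swap_len; auto.
        * auto.
        * rewrite swap_invol. auto.
        * rewrite B4, swap_invol. auto.
      + intros u Hu. rewrite swap_firstn by auto. apply H2; auto.
      + intros e0 [<-|He0].
        * change (s' (pre n' (ex e))) with w. change (pre n' (ey e)) with tt. unfold swap. destruct (lbeq w w); congruence.
        * assert (He0F : In e0 F) by (apply Hi; simpl; auto).
          rewrite H3 by auto.
          assert (Claim : pre n' (ey e0) = w \/ pre n' (ey e0) = tt -> w = tt /\ pre n' (ey e0) = tt).
          { intros [E|E].
            - assert (Ex : pre n' (ex e0) = pre n' (ex e)).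
              { rewrite <- H3 in E by auto. unfold w in E.
                destruct (H1 (pre n' (ex e0)) (length_pre _ _)) as [_ [_ [C _]]].
                destruct (H1 (pre n' (ex e)) (length_pre _ _)) as [_ [_ [C' _]]].
                rewrite <- C, <- C', E. auto. }
              assert (Ex' : ex e0 = ex e) by (apply Hsx'; auto; apply in_map; auto).
              assert (Ey : ey e0 = ey e) by (apply (Hb _ _ He0F HeF); auto).
              unfold w, tt. rewrite <- Ex', H3, Ey by auto. auto.
            - unfold tt in E.
              assert (Ey : ey e0 = ey e) by (apply Hsy'; auto; apply in_map; auto).
              assert (Ex' : ex e0 = ex e) by (apply (Hb _ _ He0F HeF); auto).
              unfold w, tt. rewrite <- Ex', H3, Ey by auto. auto. }
          unfold swap. destruct (lbeq (pre n' (ey e0)) w) as [E|E].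
          { destruct (Claim (or_introl E)). congruence. }
          destruct (lbeq (pre n' (ey e0)) tt) as [E'|E']; auto.
          destruct (Claim (or_intror E')). congruence. }
  destruct (Main F (incl_refl _)) as [s' [t' [H1 [H2 H3]]]].
  exists n', s', t'. split; [auto|split; [unfold n'; lia|split; [exact H1|split; [exact H2|split; [exact H3|split; assumption]]]]].
Qed.

Record cond := mkC { lv : nat; sg : list bool -> list bool; tg : list bool -> list bool; es : list ent }.

Definition Rel := list bool -> list bool -> Cantor -> Cantor -> Prop.

Definition valid (E : Rel) (p : cond) : Prop :=
  lenok (lv p) (sg p) (tg p) /\
  (forall e, In e (es p) -> E (eu e) (ev e) (ex e) (ey e) /\ sg p (pre (lv p) (ex e)) = pre (lv p) (ey e)) /\
  (forall e1 e2, In e1 (es p) -> In e2 (es p) -> (ex e1 = ex e2 <-> ey e1 = ey e2)) /\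
  sep (lv p) (map ex (es p)).

Definition cle (q p : cond) : Prop :=
  lv p <= lv q /\ refines (lv p) (lv q) (sg p) (sg q) /\ incl (es p) (es q).

Lemma cle_refl E p : valid E p -> cle p p.
Proof.
  intros [Hl _]. split; [lia|split; [|apply incl_refl]].
  intros u Hu. rewrite !firstn_all2; auto; try lia. destruct (Hl u Hu) as [H _]. lia.
Qed.

Lemma cle_trans p q r : cle p q -> cle q r -> cle p r.
Proof.
  intros [H1 [H2 H3]] [H4 [H5 H6]]. split; [lia|split; [|eapply incl_tran; eauto]].
  intros u Hu. replace (firstn (lv r) (sg p u)) with (firstn (lv r) (firstn (lv q) (sg p u))).
  - rewrite H2 by auto. rewrite H5.
    + rewrite firstn_firstn. f_equal. f_equal. lia.
    + rewrite length_firstn. lia.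
  - rewrite firstn_firstn. f_equal. lia.
Qed.

Fixpoint all_str (n : nat) : list (list bool) :=
  match n with 0 => [[]] | S n => flat_map (fun u => [false :: u; true :: u]) (all_str n) end.

Lemma all_str_in n u : length u = n -> In u (all_str n).
Proof.
  revert u; induction n; intros [|b u] H; simpl in *; try discriminate; auto.
  apply in_flat_map. exists u. split; [apply IHn; lia|]. destruct b; simpl; auto.
Qed.

Lemma map_eq_in {A B} (f g : A -> B) l u : map f l = map g l -> In u l -> f u = g u.
Proof.
  induction l; simpl; [tauto|]. intros H [<-|Hu]; injection H; auto.
Qed.

Lemma map_inj {A B} (f : A -> B) (Hf : forall x y, f x = f y -> x = y) l l' : map f l = map f l' -> l = l'.
Proof.
  revert l'; induction l; intros [|b l'] H; simpl in H; try discriminate; auto.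
  injection H as H1 H2. f_equal; auto.
Qed.

Definition lbcode (u : list bool) : nat := code (map Nat.b2n u).

Lemma lbcode_inj u u' : lbcode u = lbcode u' -> u = u'.
Proof.
  intro H. apply code_inj in H. apply map_inj in H; auto.
  intros [] []; simpl; congruence.
Qed.

Definition ccode (n : nat) (e : ent) : nat :=
  code [lbcode (pre n (ex e)); lbcode (pre n (ey e)); lbcode (eu e); lbcode (ev e)].

Lemma ccode_inj n e e' : ccode n e = ccode n e' ->
  pre n (ex e) = pre n (ex e') /\ pre n (ey e) = pre n (ey e') /\ eu e = eu e' /\ ev e = ev e'.
Proof.
  intro H. apply code_inj in H. injection H as H1 H2 H3 H4.
  apply lbcode_inj in H1, H2, H3, H4. auto.
Qed.

Definition color (p : cond) : nat :=
  Cantor.to_nat (lv p, Cantor.to_nat (code (map lbcode (map (sg p) (all_str (lv p)))),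
                                     code (map (ccode (lv p)) (es p)))).

Lemma color_eq p q : color p = color q ->
  lv p = lv q /\ (forall u, length u = lv p -> sg p u = sg q u) /\
  map (ccode (lv p)) (es p) = map (ccode (lv p)) (es q).
Proof.
  intro H. unfold color in H. apply (f_equal Cantor.of_nat) in H. rewrite !Cantor.cancel_of_to in H.
  pose proof (f_equal fst H) as H1. pose proof (f_equal snd H) as H2. cbn [fst snd] in H1, H2.
  apply (f_equal Cantor.of_nat) in H2. rewrite !Cantor.cancel_of_to in H2.
  pose proof (f_equal fst H2) as H3. pose proof (f_equal snd H2) as H4. cbn [fst snd] in H3, H4.
  clear H H2. rename H3 into H2. rename H4 into H3. rewrite <- H1 in H2, H3.
  apply code_inj in H2, H3. apply map_inj in H2; [|apply lbcode_inj].
  split; auto. split; auto. intros u Hu. eapply map_eq_in; eauto. apply all_str_in; auto.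
Qed.

Lemma ysep E p e1 e2 : valid E p -> In e1 (es p) -> In e2 (es p) ->
  pre (lv p) (ey e1) = pre (lv p) (ey e2) -> ey e1 = ey e2.
Proof.
  intros [Hl [He [Hb Hs]]] H1 H2 Hy.
  apply (Hb _ _ H1 H2). apply Hs; try (apply in_map; auto).
  destruct (He _ H1) as [_ C1]. destruct (He _ H2) as [_ C2].
  destruct (Hl _ (length_pre (lv p) (ex e1))) as [_ [_ [D1 _]]].
  destruct (Hl _ (length_pre (lv p) (ex e2))) as [_ [_ [D2 _]]].
  rewrite <- D1, <- D2, C1, C2, Hy. auto.
Qed.

Definition dent : ent := mkE (fun _ => false) (fun _ => false) [] [].

Lemma align (E : Rel)
  (Ed1 : forall u v x y1 y2, E u v x y1 -> E u v x y2 -> y1 = y2)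
  (Ed2 : forall u v x1 x2 y, E u v x1 y -> E u v x2 y -> x1 = x2)
  p (Fq : list ent) : valid E p -> (forall e, In e Fq -> E (eu e) (ev e) (ex e) (ey e)) ->
  map (ccode (lv p)) (es p) = map (ccode (lv p)) Fq ->
  forall e1 e2, In e1 (es p) -> In e2 Fq -> (ex e1 = ex e2 <-> ey e1 = ey e2).
Proof.
  intros Hp HFq Hm e1 e2 H1 H2.
  destruct (In_nth _ _ dent H2) as [k [Hk Hk2]].
  assert (Hlen : length (es p) = length Fq) by (rewrite <- (length_map (ccode (lv p)) (es p)), Hm, length_map; auto).
  set (e1' := nth k (es p) dent).
  assert (H1' : In e1' (es p)) by (apply nth_In; lia).
  assert (Hc : ccode (lv p) e1' = ccode (lv p) e2).
  { unfold e1'. rewrite <- Hk2, <- (map_nth (ccode (lv p)) (es p) dent k), <- (map_nth (ccode (lv p)) Fq dent k), Hm. reflexivity. }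
  apply ccode_inj in Hc. destruct Hc as [Cx [Cy [Cu Cv]]].
  destruct Hp as [Hl [He [Hb Hs]]].
  assert (E1 := proj1 (He _ H1')). assert (E2 := HFq _ H2).
  rewrite Cu, Cv in E1.
  split; intro Hx.
  - assert (X1 : ex e1' = ex e1).
    { apply Hs; try (apply in_map; auto). rewrite Cx, Hx. auto. }
    assert (Y1 : ey e1' = ey e1) by (apply (Hb _ _ H1' H1); auto).
    rewrite <- Y1. rewrite X1, Hx in E1. eapply Ed1; eauto.
  - assert (Y1 : ey e1' = ey e1).
    { apply (ysep E p); auto. split; auto. rewrite Cy, Hx. auto. }
    assert (X1 : ex e1' = ex e1) by (apply (Hb _ _ H1' H1); auto).
    rewrite <- X1. rewrite Y1, Hx in E1. eapply Ed2; eauto.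
Qed.

Definition PE (E : Rel) := {p : cond | valid E p}.
Definition ple (E : Rel) (q p : PE E) : Prop := cle (proj1_sig q) (proj1_sig p).

Lemma triv_valid E : valid E (mkC 0 (fun u => u) (fun u => u) []).
Proof.
  split; [|split; [|split]]; simpl.
  - intros u Hu. auto.
  - intros _ [].
  - intros _ _ [].
  - intros ? ? [].
Qed.

Lemma ple_sc (E : Rel)
  (Ed1 : forall u v x y1 y2, E u v x y1 -> E u v x y2 -> y1 = y2)
  (Ed2 : forall u v x1 x2 y, E u v x1 y -> E u v x2 y -> x1 = x2) :
  sigma_centered (ple E).
Proof.
  exists (fun p => color (proj1_sig p)). intros n l Hl.
  destruct l as [|p0 l'].
  - exists (exist _ _ (triv_valid E)). intros _ [].
  - pose (c0 := proj1_sig p0). assert (V0 : valid E c0) by exact (proj2_sig p0).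
    assert (Hq : forall p : PE E, In p (p0 :: l') -> lv (proj1_sig p) = lv c0 /\
        (forall u, length u = lv c0 -> sg (proj1_sig p) u = sg c0 u) /\
        map (ccode (lv c0)) (es (proj1_sig p)) = map (ccode (lv c0)) (es c0)).
    { intros p Hp. assert (C : color (proj1_sig p) = color c0).
      { rewrite (Hl p Hp), <- (Hl p0 (or_introl eq_refl)). auto. }
      apply color_eq in C. destruct C as [C1 [C2 C3]]. rewrite <- C1.
      split; auto. }
    set (F := flat_map (fun p : PE E => es (proj1_sig p)) (p0 :: l')).
    assert (HF : forall e, In e F -> exists p : PE E, In p (p0 :: l') /\ In e (es (proj1_sig p))).
    { intros e He. apply in_flat_map in He. destruct He as [p [? ?]]; eauto. }
    assert (HE : forall e, In e F -> E (eu e) (ev e) (ex e) (ey e) /\ sg c0 (pre (lv c0) (ex e)) = pre (lv c0) (ey e)).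
    { intros e He. destruct (HF e He) as [p [Hp Hep]].
      destruct (Hq p Hp) as [Q1 [Q2 Q3]].
      destruct (proj2_sig p) as [_ [Hv _]]. destruct (Hv e Hep) as [Hv1 Hv2].
      split; auto. rewrite <- Q2 by apply length_pre. rewrite <- Q1. auto. }
    assert (HB : forall e1 e2, In e1 F -> In e2 F -> (ex e1 = ex e2 <-> ey e1 = ey e2)).
    { intros e1 e2 H1 H2. destruct (HF e1 H1) as [p [Hp Hep]]. destruct (HF e2 H2) as [q [Hq' Heq]].
      destruct (Hq p Hp) as [P1 [_ P3]]. destruct (Hq q Hq') as [Q1 [_ Q3]].
      apply (align E Ed1 Ed2 (proj1_sig p) (es (proj1_sig q))); auto.
      - exact (proj2_sig p).
      - intros e He. destruct (proj2_sig q) as [_ [Hv _]]. apply (Hv e He).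
      - rewrite P1, P3, Q3. auto. }
    destruct (raise (lv c0) (sg c0) (tg c0) F [] [] 0) as [n' [s' [t' [R1 [_ [R3 [R4 [R5 [R6 _]]]]]]]]].
    { exact (proj1 V0). }
    { intros e He. apply HE; auto. }
    { auto. }
    assert (Vr : valid E (mkC n' s' t' F)).
    { split; [|split; [|split]]; simpl; auto.
      - intros e He. split; [apply HE; auto|apply R5; auto].
      - eapply sep_sub; eauto. apply incl_appl, incl_refl. }
    exists (exist _ _ Vr). intros p Hp. destruct (Hq p Hp) as [Q1 [Q2 _]].
    unfold ple, cle; simpl. rewrite Q1. split; auto. split.
    + intros u Hu. rewrite R4 by auto. rewrite Q2; auto. rewrite length_firstn. lia.
    + intros e He. apply in_flat_map. eauto.
Qed.

Lemma dens_lev E p N : valid E p -> exists q, valid E q /\ cle q p /\ N <= lv q.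
Proof.
  intros [Hl [He [Hb Hs]]].
  destruct (raise (lv p) (sg p) (tg p) (es p) [] [] N) as [n' [s' [t' [R1 [R2 [R3 [R4 [R5 [R6 _]]]]]]]]]; auto.
  { intros e H. apply He; auto. }
  exists (mkC n' s' t' (es p)). split; [|split; simpl; auto].
  - split; [|split; [|split]]; simpl; auto.
    + intros e H. split; [apply He; auto|apply R5; auto].
    + eapply sep_sub; eauto. apply incl_appl, incl_refl.
  - split; auto. split; auto. apply incl_refl.
Qed.

Lemma lenok_inj n s t u u' : lenok n s t -> length u = n -> length u' = n -> s u = s u' -> u = u'.
Proof.
  intros Hl H1 H2 E. destruct (Hl u H1) as [_ [_ [A _]]]. destruct (Hl u' H2) as [_ [_ [B _]]].
  rewrite <- A, <- B, E. auto.
Qed.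

Lemma dens_A (E : Rel) (SA : Cantor -> Prop)
  (RA : forall x, SA x -> forall w, exists y u v, E u v x y /\ cone w y) p x :
  SA x -> valid E p -> exists q, valid E q /\ cle q p /\ exists e, In e (es q) /\ ex e = x.
Proof.
  intros Hx Vp. destruct (classic (exists e, In e (es p) /\ ex e = x)) as [Hin|Hin].
  { exists p. split; auto. split; auto. eapply cle_refl; eauto. }
  destruct Vp as [Hl [He [Hb Hs]]].
  destruct (raise (lv p) (sg p) (tg p) (es p) [x] [] 0) as [n' [s' [t' [R1 [R2 [R3 [R4 [R5 [R6 _]]]]]]]]]; auto.
  { intros e H. apply He; auto. }
  set (w := s' (pre n' x)).
  destruct (RA x Hx w) as [y [u [v [Ey Cy]]]].
  assert (Hw : length w = n') by (apply R3, length_pre).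
  assert (Py : pre n' y = w) by (unfold cone in Cy; rewrite Hw in Cy; auto).
  assert (Sx : forall e0, In e0 (es p) -> pre n' x = pre n' (ex e0) -> False).
  { intros e0 H0 E0. apply Hin. exists e0. split; auto. symmetry.
    apply R6; auto; apply in_or_app; [right; simpl; auto|left; apply in_map; auto]. }
  assert (Ny : forall e0, In e0 (es p) -> y = ey e0 -> False).
  { intros e0 H0 E0. apply (Sx e0 H0). apply (lenok_inj n' s' t'); auto using length_pre.
    rewrite R5 by auto. fold w. rewrite <- Py, E0. auto. }
  exists (mkC n' s' t' (mkE x y u v :: es p)). split; [|split].
  - split; [|split; [|split]]; simpl; auto.
    + intros e [<-|H]; simpl.
      * split; auto.
      * split; [apply He; auto|apply R5; auto].
    + intros e1 e2 [<-|H1] [<-|H2]; simpl.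
      * tauto.
      * split; intro Q; exfalso; [apply Hin; eauto|apply (Ny e2 H2); auto].
      * split; intro Q; exfalso; [apply Hin; eauto|apply (Ny e1 H1); auto].
      * apply Hb; auto.
    + intros x1 x2 H1 H2 Q. apply R6; auto.
      * destruct H1 as [<-|H1]; apply in_or_app; [right; simpl; auto|left; auto].
      * destruct H2 as [<-|H2]; apply in_or_app; [right; simpl; auto|left; auto].
  - split; simpl; auto. split; auto. intros e H; simpl; auto.
  - exists (mkE x y u v). simpl. auto.
Qed.

Lemma dens_B (E : Rel) (SB : Cantor -> Prop)
  (RB : forall y, SB y -> forall w, exists x u v, E u v x y /\ cone w x) p y :
  SB y -> valid E p -> exists q, valid E q /\ cle q p /\ exists e, In e (es q) /\ ey e = y.
Proof.
  intros Hy Vp. destruct (classic (exists e, In e (es p) /\ ey e = y)) as [Hin|Hin].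
  { exists p. split; auto. split; auto. eapply cle_refl; eauto. }
  destruct Vp as [Hl [He [Hb Hs]]].
  destruct (raise (lv p) (sg p) (tg p) (es p) [] [y] 0) as [n' [s' [t' [R1 [R2 [R3 [R4 [R5 [R6 R7]]]]]]]]]; auto.
  { intros e H. apply He; auto. }
  set (w := t' (pre n' y)).
  destruct (RB y Hy w) as [x [u [v [Ex Cx]]]].
  assert (Hw : length w = n') by (apply R3, length_pre).
  assert (Px : pre n' x = w) by (unfold cone in Cx; rewrite Hw in Cx; auto).
  assert (Sxy : s' (pre n' x) = pre n' y).
  { rewrite Px. unfold w. apply R3, length_pre. }
  assert (Sy : forall e0, In e0 (es p) -> pre n' y = pre n' (ey e0) -> False).
  { intros e0 H0 E0. apply Hin. exists e0. split; auto. symmetry.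
    apply R7; auto; apply in_or_app; [right; simpl; auto|left; apply in_map; auto]. }
  assert (Nx : forall e0, In e0 (es p) -> pre n' x = pre n' (ex e0) -> False).
  { intros e0 H0 E0. apply (Sy e0 H0). rewrite <- Sxy, E0. apply R5; auto. }
  exists (mkC n' s' t' (mkE x y u v :: es p)). split; [|split].
  - split; [|split; [|split]]; simpl; auto.
    + intros e [<-|H]; simpl.
      * split; auto.
      * split; [apply He; auto|apply R5; auto].
    + intros e1 e2 [<-|H1] [<-|H2]; simpl.
      * tauto.
      * split; intro Q; exfalso; [apply (Nx e2 H2); rewrite Q; auto|apply Hin; eauto].
      * split; intro Q; exfalso; [apply (Nx e1 H1); rewrite Q; auto|apply Hin; eauto].
      * apply Hb; auto.
    + intros x1 x2 [<-|H1] [<-|H2] Q; auto.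
      * apply in_map_iff in H2. destruct H2 as [e2 [<- H2]]. exfalso. apply (Nx e2 H2); auto.
      * apply in_map_iff in H1. destruct H1 as [e1 [<- H1]]. exfalso. apply (Nx e1 H1); auto.
      * apply R6; auto; apply in_or_app; left; auto.
  - split; simpl; auto. split; auto. intros e H; simpl; auto.
  - exists (mkE x y u v). simpl. auto.
Qed.

Lemma sg_nth (c c' : cond) x i : cle c' c -> i < lv c ->
  nth i (sg c (pre (lv c) x)) false = nth i (sg c' (pre (lv c') x)) false.
Proof.
  intros [H1 [H2 _]] Hi.
  rewrite <- (nth_firstn_lt (sg c' (pre (lv c') x)) (lv c)) by auto.
  rewrite H2 by apply length_pre. rewrite firstn_pre by auto. auto.
Qed.

Lemma tg_refines E (c c' : cond) : valid E c -> valid E c' -> cle c' c ->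
  forall u, length u = lv c' -> firstn (lv c) (tg c' u) = tg c (firstn (lv c) u).
Proof.
  intros [Hl _] [Hl' _] [H1 [H2 _]] u Hu.
  destruct (Hl' u Hu) as [A1 [A2 [A3 A4]]].
  assert (Hf : length (firstn (lv c) (tg c' u)) = lv c) by (rewrite length_firstn; lia).
  destruct (Hl _ Hf) as [B1 [B2 [B3 B4]]].
  rewrite <- B3. f_equal. rewrite <- H2 by auto. rewrite A4. auto.
Qed.

Lemma tg_nth E (c c' : cond) y i : valid E c -> valid E c' -> cle c' c -> i < lv c ->
  nth i (tg c (pre (lv c) y)) false = nth i (tg c' (pre (lv c') y)) false.
Proof.
  intros V V' H Hi. pose proof H as [H1 _].
  rewrite <- (nth_firstn_lt (tg c' (pre (lv c') y)) (lv c)) by auto.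
  rewrite (tg_refines E c c') by (auto using length_pre). rewrite firstn_pre by auto. auto.
Qed.

Lemma core (MA : MA_sigma_centered) (E : Rel)
  (Ed1 : forall u v x y1 y2, E u v x y1 -> E u v x y2 -> y1 = y2)
  (Ed2 : forall u v x1 x2 y, E u v x1 y -> E u v x2 y -> x1 = x2)
  (SA SB : Cantor -> Prop)
  (RA : forall x, SA x -> forall w, exists y u v, E u v x y /\ cone w y)
  (RB : forall y, SB y -> forall w, exists x u v, E u v x y /\ cone w x)
  (HI : card_lt (({x | SA x} + {y | SB y}) + nat) Cantor) :
  exists f, homeomorphism f /\ (forall x, SA x -> exists u v, E u v x (f x)) /\
    (forall y, SB y -> exists x u v, E u v x y /\ f x = y).
Proof.
  pose (D := fun (i : ({x | SA x} + {y | SB y}) + nat) (p : PE E) =>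
    match i with
    | inl (inl x) => exists e, In e (es (proj1_sig p)) /\ ex e = proj1_sig x
    | inl (inr y) => exists e, In e (es (proj1_sig p)) /\ ey e = proj1_sig y
    | inr N => N <= lv (proj1_sig p) end).
  destruct (MA_pre MA (PE E) (ple E)) with (D := D) as [G [HG HGm]].
  - intros [c V]. unfold ple. simpl. eapply cle_refl; eauto.
  - intros p q r. unfold ple. apply cle_trans.
  - apply ple_sc; auto.
  - exact HI.
  - intros [[[x Hx]|[y Hy]]|N] [c V]; simpl.
    + destruct (dens_A E SA RA c x Hx V) as [q [Vq [H1 H2]]]. exists (exist _ q Vq). auto.
    + destruct (dens_B E SB RB c y Hy V) as [q [Vq [H1 H2]]]. exists (exist _ q Vq). auto.
    + destruct (dens_lev E c N V) as [q [Vq [H1 H2]]]. exists (exist _ q Vq). auto.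
  - assert (Hpick : forall i, exists p, G p /\ S i <= lv (proj1_sig p))
      by (intro i; exact (HGm (inr (S i)))).
    pose (pk := fun i => proj1_sig (constructive_indefinite_description _ (Hpick i))).
    assert (Hpk : forall i, G (pk i) /\ S i <= lv (proj1_sig (pk i))).
    { intro i. exact (proj2_sig (constructive_indefinite_description _ (Hpick i))). }
    pose (pc := fun i => proj1_sig (pk i)).
    pose (f := fun x i => nth i (sg (pc i) (pre (lv (pc i)) x)) false).
    pose (g := fun y i => nth i (tg (pc i) (pre (lv (pc i)) y)) false).
    assert (Kf : forall p, G p -> forall x i, i < lv (proj1_sig p) ->
               f x i = nth i (sg (proj1_sig p) (pre (lv (proj1_sig p)) x)) false).
    { intros p Hp x i Hi. destruct (Hpk i) as [Hq1 Hq2].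
      destruct (HG _ _ Hp Hq1) as [r [Hr [Hr1 Hr2]]].
      unfold f. rewrite (sg_nth (pc i) (proj1_sig r)) by (auto; unfold pc; lia).
      rewrite (sg_nth (proj1_sig p) (proj1_sig r)) by auto. auto. }
    assert (Kg : forall p, G p -> forall y i, i < lv (proj1_sig p) ->
               g y i = nth i (tg (proj1_sig p) (pre (lv (proj1_sig p)) y)) false).
    { intros p Hp y i Hi. destruct (Hpk i) as [Hq1 Hq2].
      destruct (HG _ _ Hp Hq1) as [r [Hr [Hr1 Hr2]]].
      unfold g. rewrite (tg_nth E (pc i) (proj1_sig r)) by (auto; try exact (proj2_sig _); unfold pc; lia).
      rewrite (tg_nth E (proj1_sig p) (proj1_sig r)) by (auto; exact (proj2_sig _)). auto. }
    assert (Pf : forall p, G p -> forall x, pre (lv (proj1_sig p)) (f x) = sg (proj1_sig p) (pre (lv (proj1_sig p)) x)).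
    { intros p Hp x. destruct (proj2_sig p) as [Hl _].
      destruct (Hl _ (length_pre (lv (proj1_sig p)) x)) as [A1 _].
      apply list_eq_nth; rewrite ?length_pre; auto.
      intros i Hi. rewrite nth_pre by auto. apply Kf; auto. }
    assert (Pg : forall p, G p -> forall y, pre (lv (proj1_sig p)) (g y) = tg (proj1_sig p) (pre (lv (proj1_sig p)) y)).
    { intros p Hp y. destruct (proj2_sig p) as [Hl _].
      destruct (Hl _ (length_pre (lv (proj1_sig p)) y)) as [_ [A1 _]].
      apply list_eq_nth; rewrite ?length_pre; auto.
      intros i Hi. rewrite nth_pre by auto. apply Kg; auto. }
    assert (Cont : forall (h : Cantor -> Cantor), (forall p, G p -> forall x z,
         pre (lv (proj1_sig p)) x = pre (lv (proj1_sig p)) z ->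
         pre (lv (proj1_sig p)) (h x) = pre (lv (proj1_sig p)) (h z)) -> continuous h).
    { intros h Hh U HU x Hx. destruct (HU _ Hx) as [m Hm].
      destruct (Hpk m) as [Hq1 Hq2]. exists (lv (proj1_sig (pk m))).
      intros z Hz. apply Hm. apply agree_pre in Hz. apply Hh in Hz; auto.
      apply pre_agree in Hz. intros i Hi. apply Hz. lia. }
    assert (Ent : forall p, G p -> forall e, In e (es (proj1_sig p)) -> f (ex e) = ey e).
    { intros p Hp e He. apply functional_extensionality. intro i.
      destruct (Hpk i) as [Hq1 Hq2]. destruct (HG _ _ Hp Hq1) as [r [Hr [[Hr1 [_ Hr3]] [Hr4 _]]]].
      rewrite (Kf r Hr) by lia.
      destruct (proj2_sig r) as [_ [Hv _]]. destruct (Hv e (Hr3 e He)) as [_ ->].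
      apply nth_pre. lia. }
    exists f. split; [split; [|exists g; split; [|split]]|split].
    + apply Cont. intros p Hp x z Hxz. rewrite !Pf, Hxz by auto. auto.
    + apply Cont. intros p Hp x z Hxz. rewrite !Pg, Hxz by auto. auto.
    + intro x. apply functional_extensionality; intro i.
      destruct (Hpk i) as [Hq1 Hq2]. rewrite (Kg _ Hq1) by lia. rewrite Pf by auto.
      destruct (proj2_sig (pk i)) as [Hl _].
      destruct (Hl _ (length_pre (lv (proj1_sig (pk i))) x)) as [_ [_ [A3 _]]].
      rewrite A3. apply nth_pre. lia.
    + intro y. apply functional_extensionality; intro i.
      destruct (Hpk i) as [Hq1 Hq2]. rewrite (Kf _ Hq1) by lia. rewrite Pg by auto.
      destruct (proj2_sig (pk i)) as [Hl _].
      destruct (Hl _ (length_pre (lv (proj1_sig (pk i))) y)) as [_ [_ [_ A4]]].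
      rewrite A4. apply nth_pre. lia.
    + intros x Hx. destruct (HGm (inl (inl (exist _ x Hx)))) as [p [Hp [e [He Hex]]]].
      simpl in Hex. subst x. exists (eu e), (ev e). rewrite (Ent p Hp e He).
      destruct (proj2_sig p) as [_ [Hv _]]. apply (Hv e He).
    + intros y Hy. destruct (HGm (inl (inr (exist _ y Hy)))) as [p [Hp [e [He Hey]]]].
      simpl in Hey. subst y. exists (ex e), (eu e), (ev e). rewrite (Ent p Hp e He).
      destruct (proj2_sig p) as [_ [Hv _]]. split; auto. apply (Hv e He).
Qed.

Lemma same_index {K} (A : K -> Cantor -> Prop)
  (dA : forall a b x, a <> b -> A a x -> A b x -> False) a b x : A a x -> A b x -> a = b.
Proof. intros H1 H2. destruct (classic (a = b)); auto. exfalso. eauto. Qed.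

Theorem corollary2p2 :
  MA_sigma_centered ->
  forall (K : Type) (L : K -> Type) (A B : K -> Cantor -> Prop),
    card_lt K Cantor ->
    (forall a, infinite_type (L a) /\ card_lt (L a) Cantor) ->
    (forall a, dense_card (L a) (A a) /\ dense_card (L a) (B a)) ->
    (forall a b x, a <> b -> A a x -> A b x -> False) ->
    (forall a b x, a <> b -> B a x -> B b x -> False) ->
    exists f : Cantor -> Cantor, homeomorphism f /\
      forall a y, image f (A a) y <-> B a y.
Proof.
  intros MA K L A B HK HL Hd dA dB.
  pose (fA := fun a u => proj1_sig (constructive_indefinite_description _
                 (proj1 (Hd a) (cone u) (cone_open u) (cone_ne u)))).
  assert (HfA : forall a u, (forall x y, fA a u x = fA a u y -> x = y) /\ (forall l, exists x, fA a u x = l)).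
  { intros a u. exact (proj2_sig (constructive_indefinite_description _
                 (proj1 (Hd a) (cone u) (cone_open u) (cone_ne u)))). }
  pose (fB := fun a u => proj1_sig (constructive_indefinite_description _
                 (proj2 (Hd a) (cone u) (cone_open u) (cone_ne u)))).
  assert (HfB : forall a u, (forall x y, fB a u x = fB a u y -> x = y) /\ (forall l, exists x, fB a u x = l)).
  { intros a u. exact (proj2_sig (constructive_indefinite_description _
                 (proj2 (Hd a) (cone u) (cone_open u) (cone_ne u)))). }
  pose (E := fun u v x y => exists a (h1 : A a x /\ cone u x) (h2 : B a y /\ cone v y),
               fA a u (exist _ x h1) = fB a v (exist _ y h2)).
  assert (Ed1 : forall u v x y1 y2, E u v x y1 -> E u v x y2 -> y1 = y2).
  { intros u v x y1 y2 [a [h1 [h2 Q]]] [a' [h1' [h2' Q']]].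
    assert (a = a') by (apply (same_index A dA a a' x); [exact (proj1 h1)|exact (proj1 h1')]). subst a'.
    assert (h1 = h1') by apply proof_irrelevance. subst h1'.
    rewrite Q in Q'. apply (proj1 (HfB a v)) in Q'. exact (f_equal (@proj1_sig _ _) Q'). }
  assert (Ed2 : forall u v x1 x2 y, E u v x1 y -> E u v x2 y -> x1 = x2).
  { intros u v x1 x2 y [a [h1 [h2 Q]]] [a' [h1' [h2' Q']]].
    assert (a = a') by (apply (same_index B dB a a' y); [exact (proj1 h2)|exact (proj1 h2')]). subst a'.
    assert (h2 = h2') by apply proof_irrelevance. subst h2'.
    rewrite <- Q' in Q. apply (proj1 (HfA a u)) in Q. exact (f_equal (@proj1_sig _ _) Q). }
  pose (SA := fun x => exists a, A a x). pose (SB := fun y => exists a, B a y).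
  assert (RA : forall x, SA x -> forall w, exists y u v, E u v x y /\ cone w y).
  { intros x [a Hx] w. assert (h1 : A a x /\ cone [] x) by (split; auto; reflexivity).
    destruct (proj2 (HfB a w) (fA a [] (exist _ x h1))) as [[y h2] Hy].
    exists y, [], w. split; [|exact (proj2 h2)]. exists a, h1, h2. auto. }
  assert (RB : forall y, SB y -> forall w, exists x u v, E u v x y /\ cone w x).
  { intros y [a Hy] w. assert (h2 : B a y /\ cone [] y) by (split; auto; reflexivity).
    destruct (proj2 (HfA a w) (fB a [] (exist _ y h2))) as [[x h1] Hx].
    exists x, w, []. split; [|exact (proj2 h1)]. exists a, h1, h2. auto. }
  assert (Hpt : forall (C : K -> Cantor -> Prop), (forall a, dense_card (L a) (C a)) ->
            card_lt {x | exists a, C a x} Cantor).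
  { intros C HC. apply (card_lt_mono _ {a : K & {x | C a x}}).
    - exists (fun s : {x | exists a, C a x} =>
        existT (fun a => {x | C a x})
          (proj1_sig (constructive_indefinite_description (fun a => C a (proj1_sig s)) (proj2_sig s)))
          (exist (fun x => C _ x) (proj1_sig s)
             (proj2_sig (constructive_indefinite_description (fun a => C a (proj1_sig s)) (proj2_sig s))))).
      intros s s' Q. apply (f_equal (fun t : {a : K & {x | C a x}} => proj1_sig (projT2 t))) in Q. simpl in Q.
      destruct s, s'; simpl in *; subst. f_equal. apply proof_irrelevance.
    - apply GL; auto. intro a. apply (card_lt_mono _ (L a)); [|apply HL].
      assert (Ho : is_open (fun _ : Cantor => True)) by (intros x _; exists 0; auto).
      destruct (HC a (fun _ => True) Ho (ex_intro _ (fun _ => true) I)) as [g [Hg _]].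
      exists (fun s => g (exist _ (proj1_sig s) (conj (proj2_sig s) I))).
      intros s s' Q. apply Hg in Q. apply (f_equal (@proj1_sig _ _)) in Q. simpl in Q.
      destruct s, s'; simpl in *; subst. f_equal. apply proof_irrelevance. }
  assert (HI : card_lt (({x | SA x} + {y | SB y}) + nat) Cantor).
  { apply sum_nat_lt. apply sum_lt; auto.
    - apply Hpt. intro a. apply Hd.
    - apply Hpt. intro a. apply Hd. }
  destruct (core MA E Ed1 Ed2 SA SB RA RB HI) as [f [Hf [HfA' HfB']]].
  exists f. split; auto. intros a y. split.
  - intros [x [Ax <-]]. destruct (HfA' x (ex_intro _ a Ax)) as [u [v [a' [h1 [h2 _]]]]].
    assert (a = a') by (apply (same_index A dA a a' x); [exact Ax|exact (proj1 h1)]). subst. exact (proj1 h2).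
  - intro By. destruct (HfB' y (ex_intro _ a By)) as [x [u [v [[a' [h1 [h2 _]]] Hxy]]]].
    assert (a = a') by (apply (same_index B dB a a' y); [exact By|exact (proj1 h2)]). subst. exists x. split; [exact (proj1 h1)|auto].
Qed.
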